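(* Let $F:\mathbb{R}^d\to\mathbb{R}^d$ be smooth and consider $\dot{x}=F(x)$. Each of the two schemes $$x_{n+1}=x_n+\big(1-e^{-h_nF'(x_n)}\big)\big(F'(x_n)\big)^{-1}F(x_{n+1})$$ and $$x_{n+1}=x_n+\big(1-e^{-h_nF'(x_{n+1})}\big)\big(F'(x_{n+1})\big)^{-1}F(x_{n+1})$$ is locally exact. These are the schemes $x_{n+1}=x_n+\delta(\bar x,h_n)F(x_{n+1})$ with $\delta(\bar x,h)=\big(1-e^{-hF'(\bar x)}\big)\big(F'(\bar x)\big)^{-1}$, where $\bar x=x_n$ and $\bar x=x_{n+1}$ respectively. For every $n$, each scheme is locally exact at the corresponding point $\bar x$.
   Context: $F'(x)$ denotes the Jacobian matrix of $F$. Throughout, $F'(\bar x)$ is assumed invertible at the points $\bar x$ considered, and $1$ denotes the identity matrix. The linearization of $\dot{x}=F(x)$ around $\bar x$ is $\dot\xi=F'(\bar x)\xi+F(\bar x)$ with $\xi=x-\bar x$. Its exact discretization with step $h_n$ is $$\xi_{n+1}=e^{h_nF'(\bar x)}\xi_n+\big(e^{h_nF'(\bar x)}-1\big)F'(\bar x)^{-1}F(\bar x).$$ Consider a scheme $x_{n+1}-x_n=\delta(\bar x,h_n)\,\Psi(x_n,x_{n+1})$ in which the matrix $\delta$ depends only on $\bar x$ and $h_n$. Its linearization at $\bar x$ is obtained as follows: - substitute $x_n=\bar x+\xi_n$ and $x_{n+1}=\bar x+\xi_{n+1}$; - keep $\delta(\bar x,h_n)$ fixed; - retain only terms up to first order in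 $\xi_n,\xi_{n+1}$. The scheme is locally exact at $\bar x$ if this linear relation coincides with the exact discretization above, viewed as a relation determining $\xi_{n+1}$ from $\xi_n$. It is locally exact if there is a sequence $\bar x_n$ with $\bar x_n-x_n=O(h_n)$ such that, for every $n$, the scheme is locally exact at $\bar x_n$. *)

(* Defs.v *)
From HB Require Import structures.
From mathcomp Require Import all_boot all_order all_algebra.
From mathcomp Require Import all_classical all_reals all_analysis.
Set Implicit Arguments. Unset Strict Implicit. Unset Printing Implicit Defensive.
Import Order.TTheory GRing.Theory Num.Theory.
Import numFieldNormedType.Exports.
Local Open Scope ring_scope.

Definition expm (R : realType) (d : nat) (A : 'M[R]_d) : 'M[R]_d :=
  limn (series (fun k : nat => (k`!%:R)^-1 *: A ^+ k)).

(* Jacobian matrix F'(x): entry (i,j) = dF_i/dx_j, i.e. column j is the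
   differential of F at x applied to the j-th standard basis vector. *)
Definition Fprime (R : realType) (d : nat) (F : 'cV[R]_d -> 'cV[R]_d)
  (x : 'cV[R]_d) : 'M[R]_d :=
  \matrix_(i < d, j < d) ('d F x (delta_mx j 0 : 'cV[R]_d)) i 0.

(* Linearization at xbar of the scheme  x_{n+1} - x_n = delta(xbar,h) Psi(x_n,x_{n+1}):
   substitute x_n = xbar + xi, x_{n+1} = xbar + xi', keep delta(xbar,h) fixed and
   keep terms up to first order in (xi, xi'):
     xi' - xi = delta(xbar,h) (Psi(xbar,xbar) + dPsi_(xbar,xbar)(xi, xi')). *)
Definition lin_scheme (R : realType) (d : nat)
  (Psi : 'cV[R]_d * 'cV[R]_d -> 'cV[R]_d)
  (delta : 'cV[R]_d -> R -> 'M[R]_d) (xbar : 'cV[R]_d) (h : R)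
  (xi xi' : 'cV[R]_d) : Prop :=
  xi' - xi = delta xbar h *m (Psi (xbar, xbar) + 'd Psi (xbar, xbar) (xi, xi')).

(* Exact discretization, with step h, of the linearization of x' = F(x) at xbar:
     xi' = e^{h F'(xbar)} xi + (e^{h F'(xbar)} - 1) F'(xbar)^{-1} F(xbar). *)
Definition exact_disc (R : realType) (d : nat) (F : 'cV[R]_d -> 'cV[R]_d)
  (xbar : 'cV[R]_d) (h : R) (xi : 'cV[R]_d) : 'cV[R]_d :=
  expm (h *: Fprime F xbar) *m xi
  + (expm (h *: Fprime F xbar) - 1%:M) *m invmx (Fprime F xbar) *m F xbar.

Definition locally_exact_at (R : realType) (d : nat) (F : 'cV[R]_d -> 'cV[R]_d)
  (Psi : 'cV[R]_d * 'cV[R]_d -> 'cV[R]_d)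
  (delta : 'cV[R]_d -> R -> 'M[R]_d) (xbar : 'cV[R]_d) (h : R) : Prop :=
  forall xi xi' : 'cV[R]_d,
    lin_scheme Psi delta xbar h xi xi' <-> xi' = exact_disc F xbar h xi.

Definition delta_exp (R : realType) (d : nat) (F : 'cV[R]_d -> 'cV[R]_d)
  (xbar : 'cV[R]_d) (h : R) : 'M[R]_d :=
  (1%:M - expm ((- h) *: Fprime F xbar)) *m invmx (Fprime F xbar).

(* Main.v *)
Require Import Defs.
From HB Require Import structures.
From mathcomp Require Import all_boot all_order all_algebra.
From mathcomp Require Import all_classical all_reals all_analysis.
From mathcomp Require Import ring.
Import Order.TTheory GRing.Theory Num.Theory.
Import numFieldNormedType.Exports.
Set Implicit Arguments. Unset Strict Implicit. Unset Printing Implicit Defensive.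
Local Open Scope classical_set_scope.
Local Open Scope ring_scope.

HB.instance Definition _ (R : realType) m n := Complete.copy 'M[R]_(m,n) 'M[R]_(m,n).

Section Tri.
Variables (R : realType) (V : algType R).

Definition gterm (x y : V) (i j : nat) : V :=
  ((i`!%:R : R)^-1 * (j`!%:R)^-1) *: (x ^+ i * y ^+ j).

Lemma binom_step (x y : V) N : GRing.comm x y ->
  ((N`!%:R : R)^-1) *: (x + y) ^+ N = \sum_(0 <= i < N.+1) gterm x y i (N - i).
Proof.
move=> cxy; rewrite addrC exprDn_comm; last exact/commr_sym.
rewrite scaler_sumr big_mkord; apply: eq_bigr => -[i /=]; rewrite ltnS => iN _.
have c : GRing.comm (y ^+ (N - i)) (x ^+ i) := commrX i (commr_sym (commrX (N - i) cxy)).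
rewrite /gterm -[_ * _ *+ _](@scaler_nat R) scalerA c.
congr (_ *: _).
have := bin_fact iN; move/(congr1 (fun k => (k%:R : R))); rewrite !natrM => h.
have f1 : (i`!%:R : R) != 0 by rewrite pnatr_eq0 -lt0n fact_gt0.
have f2 : ((N - i)`!%:R : R) != 0 by rewrite pnatr_eq0 -lt0n fact_gt0.
have f3 : ('C(N, i)%:R : R) != 0 by rewrite pnatr_eq0 -lt0n bin_gt0.
rewrite -h; field; by rewrite f1 f2 f3.
Qed.

Lemma tri_sum (x y : V) N : GRing.comm x y ->
  \sum_(0 <= k < N) ((k`!%:R : R)^-1) *: (x + y) ^+ k =
  \sum_(0 <= i < N) \sum_(0 <= j < N - i) gterm x y i j.
Proof.
move=> cxy; elim: N => [|N IH]; first by rewrite !big_geq.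
rewrite big_nat_recr //= IH binom_step //.
have -> : \sum_(0 <= i < N.+1) \sum_(0 <= j < N.+1 - i) gterm x y i j =
    \sum_(0 <= i < N.+1) (\sum_(0 <= j < N - i) gterm x y i j + gterm x y i (N - i)).
  apply: eq_big_nat => i /andP[_ iN]; rewrite subSn ?big_nat_recr //.
rewrite big_split /= [X in _ = X + _]big_nat_recr //= subnn (@big_geq _ _ _ 0 0) // addr0.
reflexivity.
Qed.

Lemma double_split (x y : V) N :
  (\sum_(0 <= i < N) ((i`!%:R : R)^-1) *: x ^+ i) *
  (\sum_(0 <= j < N) ((j`!%:R : R)^-1) *: y ^+ j) =
  \sum_(0 <= i < N) \sum_(0 <= j < N - i) gterm x y i j +
  \sum_(0 <= i < N) \sum_(N - i <= j < N) gterm x y i j.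
Proof.
rewrite -big_split /= big_distrl /=; apply: eq_big_nat => i /andP[_ iN].
rewrite big_distrr /= -big_cat_nat ?leq_subr //; apply: eq_bigr => j _.
by rewrite /gterm -scalerAl -scalerAr scalerA.
Qed.

End Tri.
Section MxNorm.
Variable R : realType.
Lemma mx_entry_le m p (M : 'M[R]_(m,p)) i j : `|M i j| <= `|M|.
Proof.
rewrite [X in _ <= X]/Num.norm /= mx_normrE.
exact: (le_bigmax 0 (fun ij : 'I_m * 'I_p => `|M ij.1 ij.2|) (i, j)).
Qed.
Lemma mx_norm_le m p (M : 'M[R]_(m,p)) c : 0 <= c ->
  (forall i j, `|M i j| <= c) -> `|M| <= c.
Proof.
move=> c0 h; rewrite [X in X <= _]/Num.norm /= mx_normrE.
by apply: bigmax_le => // -[i j] _; apply: h.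
Qed.

Lemma norm_mulmx m p q (A : 'M[R]_(m,p)) (B : 'M[R]_(p,q)) :
  `|A *m B| <= p%:R * `|A| * `|B|.
Proof.
apply: mx_norm_le; first by rewrite !mulr_ge0.
move=> i j; rewrite mxE (le_trans (ler_norm_sum _ _ _)) //.
rewrite (@le_trans _ _ (\sum_(k < p) `|A| * `|B|)) //.
  apply: ler_sum => k _; rewrite normrM ler_pM //; exact: mx_entry_le.
by rewrite sumr_const card_ord mulr_natl mulrnAl.
Qed.

Lemma norm_pow n (A : 'M[R]_n.+1) k :
  `|A ^+ k| <= (n.+1%:R * `|A| + 1) ^+ k.
Proof.
elim: k => [|k IH].
  rewrite expr0; apply: mx_norm_le => // i j; rewrite !mxE.
  by case: (i == j); rewrite ?normr1 ?normr0.
rewrite exprS -mulmxE (le_trans (norm_mulmx A (A ^+ k))) // exprS.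
by rewrite ler_pM ?mulr_ge0 // lerDl.
Qed.
End MxNorm.

Section Expm.
Variables (R : realType) (n : nat).
Local Notation M := 'M[R]_n.+1.

Definition ec (A : M) (k : nat) : M := (k`!%:R)^-1 *: A ^+ k.

Lemma cvg_ec (A : M) : cvgn (series (ec A)).
Proof.
apply: normed_cvg.
apply: (@series_le_cvg R _ (exp_coeff (n.+1%:R * `|A| + 1))).
- by move=> k; exact: normr_ge0.
- by move=> k; apply: exp_coeff_ge0; rewrite addr_ge0 ?mulr_ge0.
- move=> k; rewrite /= /ec normrZ /exp_coeff /= mulrC ger0_norm; last first.
    by rewrite invr_ge0.
  by rewrite ler_pM2r ?invr_gt0 ?ltr0n ?fact_gt0 // norm_pow.
- exact: is_cvg_series_exp_coeff.
Qed.

End Expm.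

Lemma cvg_entry (R : realType) m p (u : nat -> 'M[R]_(m,p)) (L : 'M[R]_(m,p)) i j :
  u @ \oo --> L -> (fun N => u N i j) @ \oo --> L i j.
Proof. move=> h; exact: (cvg_comp _ _ h (@coord_continuous R m p i j L)). Qed.

Section ExpmInv.
Variables (R : realType) (n : nat).
Local Notation M := 'M[R]_n.+1.

Lemma expm_mulN (A : M) : expm A * expm (- A) = 1.
Proof.
set m := n.+1%:R * `|A| + 1.
have m0 : 0 <= m by rewrite addr_ge0 ?mulr_ge0.
have cS : series (ec A) @ \oo --> expm A by exact: cvg_ec.
have cT : series (ec (- A)) @ \oo --> expm (- A) by exact: cvg_ec.
have key N : series (ec A) N.+1 * series (ec (-A)) N.+1 - 1 =
    \sum_(0 <= i < N.+1) \sum_(N.+1 - i <= j < N.+1) gterm A (-A) i j.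
  rewrite !seriesEnat /= double_split -tri_sum; last exact/commrN/commr_refl.
  have e1 : \sum_(0 <= k < N.+1) ((k`!%:R : R)^-1) *: (0 : M) ^+ k = 1.
    rewrite big_nat_recl // expr0 fact0 invr1 scale1r big1 ?addr0 //.
    by move=> k _; rewrite expr0n /= scaler0.
  by rewrite subrr e1 addrAC subrr add0r.
pose rem N := \sum_(0 <= i < N) \sum_(N - i <= j < N) gterm (m : R^o) m i j.
have bnd N : `|series (ec A) N.+1 * series (ec (-A)) N.+1 - 1| <= n.+1%:R * rem N.+1.
  rewrite key /rem mulr_sumr; apply: (le_trans (ler_norm_sum _ _ _)).
  apply: ler_sum => i _.
  rewrite mulr_sumr; apply: (le_trans (ler_norm_sum _ _ _)); apply: ler_sum => j _.
  rewrite /gterm normrZ ger0_norm ?mulr_ge0 ?invr_ge0 ?ler0n //.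
  rewrite -mulmxE.
  have h1 := norm_mulmx (A ^+ i) ((-A) ^+ j).
  have h2 := norm_pow A i.
  have h3 := norm_pow (-A) j; rewrite normrN -/m in h3.
  rewrite -/m in h2.
  set c := _ / _.
  have c0 : 0 <= c by rewrite mulr_ge0 ?invr_ge0 ?ler0n.
  apply: (le_trans (ler_wpM2l c0 h1)).
  have hh : n.+1%:R * `|A ^+ i| * `|(- A) ^+ j| <= n.+1%:R * (m ^+ i * m ^+ j).
    by rewrite -mulrA ler_wpM2l ?ler0n // ler_pM.
  rewrite (_ : _ *: _ = c * (m ^+ i * m ^+ j)) // [X in _ <= X]mulrCA.
  by rewrite ler_wpM2l.
have hS k N : series (exp_coeff k) N = \sum_(0 <= i < N) ((i`!%:R : R)^-1) *: (k : R^o) ^+ i.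
  by rewrite seriesEnat /=; apply: eq_bigr => i _; rewrite /exp_coeff /= mulrC.
have remE N : rem N = series (exp_coeff m) N * series (exp_coeff m) N
                      - series (exp_coeff (m + m)) N.
  rewrite !hS double_split -tri_sum; last exact: commr_refl.
  by rewrite [X in X - _]addrC addrK.
have r0 : rem @ \oo --> 0.
  rewrite (_ : rem = fun N => series (exp_coeff m) N * series (exp_coeff m) N
                      - series (exp_coeff (m + m)) N); last by apply/funext => N; exact: remE.
  have -> : (0:R) = expR m * expR m - expR (m + m).
    by rewrite [expR (m + m)]expRD subrr.
  apply: cvgB; [apply: cvgM|]; exact: is_cvg_series_exp_coeff.
have r1 : (fun N => n.+1%:R * rem N.+1) @ \oo --> 0.
  have := r0; rewrite -cvg_shiftS => r2.
  have := cvgM (cvg_cst (n.+1%:R : R)) r2; rewrite mulr0; exact.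
have c1 : (fun N => series (ec A) N.+1 * series (ec (-A)) N.+1 - 1) @ \oo --> 0.
  apply/norm_cvg0P; apply: (squeeze_cvgr _ (cvg_cst 0) r1).
  by apply: nearW => N; rewrite normr_ge0 bnd.
apply/matrixP => i j.
pose P N := series (ec A) N.+1 * series (ec (-A)) N.+1.
have h2 : (fun N => P N i j) @ \oo --> (1 : M) i j.
  have e : (1:M) i j = (0:M) i j + (1:M) i j by rewrite [(0:M) i j]mxE add0r.
  rewrite e (_ : (fun N => P N i j) = (fun N => (P N - 1) i j + (1:M) i j)); last first.
    by apply/funext => N; rewrite [(P N - 1) i j]mxE [(-1 : M) i j]mxE subrK.
  apply: cvgD; [exact: cvg_entry c1 | exact: cvg_cst].
have h1 : (fun N => P N i j) @ \oo --> (expm A * expm (-A)) i j.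
  rewrite -mulmxE mxE.
  under eq_fun do rewrite /P -mulmxE mxE.
  apply: cvg_big; first exact: add_continuous.
  move=> k _; apply: cvgM; apply: cvg_entry.
    by move: cS; rewrite -cvg_shiftS.
  by move: cT; rewrite -cvg_shiftS.
by rewrite -(cvg_lim (@Rhausdorff R) h1) (cvg_lim (@Rhausdorff R) h2).
Qed.
End ExpmInv.

Section Diff.
Variables (R : realType) (d : nat).
Local Notation V := 'cV[R]_d.

Lemma snd_lin : linear (@snd V V).
Proof. by move=> a [x1 x2] [y1 y2]. Qed.

Lemma snd_cont : continuous (@snd V V).
Proof. by move=> [a b]; exact: cvg_snd. Qed.

Lemma diff_F2 (F : V -> V) (xb : V) : differentiable F xb ->
  forall xi xi' : V, 'd (fun p : V * V => F p.2) (xb, xb) (xi, xi') = 'd F xb xi'.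
Proof.
move=> dF xi xi'.
pose sL : {linear (V * V)%type -> V} := HB.pack (@snd V V) (GRing.isLinear.Build _ _ _ _ _ snd_lin).
have ds : differentiable (@snd V V) (xb, xb).
  exact: (@linear_differentiable _ _ _ sL _ snd_cont).
rewrite (_ : (fun p : V * V => F p.2) = F \o snd) //.
rewrite diff_comp //= (@diff_lin _ _ _ sL _ snd_cont) //.
Qed.

Lemma diff_mat (F : V -> V) (xb v : V) :
  'd F xb v = Fprime F xb *m v.
Proof.
apply/matrixP => i j; rewrite (ord1 j).
rewrite {1}[v]matrix_sum_delta linear_sum summxE mxE.
apply: eq_bigr => k _.
rewrite big_ord1 linearZ /= mxE mxE mulrC.
by [].
Qed.
End Diff.

Lemma alg_equiv (R : comUnitRingType) k (E E' : 'M[R]_k) (G u v : 'cV[R]_k) :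
  E *m E' = 1%:M -> E' *m E = 1%:M ->
  (v - u = (1%:M - E') *m (G + v)) <-> (v = E *m u + (E - 1%:M) *m G).
Proof.
move=> EE' E'E; split => H.
- have H1 : E' *m (G + v) = G + u.
    have e : E' *m (G + v) = (G + v) - (1%:M - E') *m (G + v).
      by rewrite mulmxBl mul1mx opprB [RHS]addrC subrK.
    by rewrite e -H opprB addrA [G + v + u]addrAC addrK.
  have H2 : G + v = E *m (G + u) by rewrite -H1 mulmxA EE' mul1mx.
  by rewrite -[v](addKr G) H2 mulmxDr mulmxBl mul1mx addrC [E *m G + _]addrC -addrA.
- have H2 : G + v = E *m (G + u).
    by rewrite H mulmxDr mulmxBl mul1mx addrCA [G + (_ - _)]addrC subrK addrC.
  rewrite mulmxBl mul1mx H2 mulmxA E'E mul1mx -H2.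
  by rewrite opprD addrACA subrr add0r.
Qed.

Lemma le_at (R : realType) (d : nat) (F : 'cV[R]_d -> 'cV[R]_d) xb h :
  differentiable F xb -> Fprime F xb \in unitmx ->
  locally_exact_at F (fun p => F p.2) (delta_exp F) xb h.
Proof.
move=> dF Ju xi xi'.
case: d F xb xi xi' dF Ju => [|n] F xb xi xi' dF Ju.
  by rewrite /lin_scheme (flatmx0 xi') (flatmx0 (exact_disc _ _ _ _)) (flatmx0 (_ - _)) (flatmx0 (_ *m _)).
rewrite /lin_scheme /exact_disc /delta_exp diff_F2 // diff_mat.
set J := Fprime F xb.
set E := expm (h *: J).
set E' := expm ((- h) *: J).
have EE' : E *m E' = 1%:M by rewrite /E /E' scaleNr mulmxE expm_mulN.
have E'E : E' *m E = 1%:M.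
  by rewrite /E /E' scaleNr mulmxE -{2}[h *: J]opprK expm_mulN.
have -> : (1%:M - E') *m invmx J *m (F xb + J *m xi') = (1%:M - E') *m (invmx J *m F xb + xi').
  by rewrite -mulmxA mulmxDr mulmxA mulVmx // mul1mx.
rewrite -mulmxA.
exact: alg_equiv.
Qed.

Unset Implicit Arguments.
Theorem corollary4p2 (R : realType) (d : nat) (F : 'cV[R]_d -> 'cV[R]_d)
  (F_diff : forall x, differentiable F x)
  (h : nat -> R) (x1 x2 : nat -> 'cV[R]_d)
  (scheme1 : forall n, x1 n.+1 = x1 n + delta_exp F (x1 n) (h n) *m F (x1 n.+1))
  (scheme2 : forall n, x2 n.+1 = x2 n + delta_exp F (x2 n.+1) (h n) *m F (x2 n.+1))
  (n : nat) :
  (Fprime F (x1 n) \in unitmx ->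
     locally_exact_at F (fun p => F p.2) (delta_exp F) (x1 n) (h n)) /\
  (Fprime F (x2 n.+1) \in unitmx ->
     locally_exact_at F (fun p => F p.2) (delta_exp F) (x2 n.+1) (h n)).
Proof. by split; apply: le_at. Qed.
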